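(* Rewriting in the free $3$-category $\mathbf{Toff}$ of reversible Boolean circuits terminates: there is no infinite sequence $\alpha_1,\alpha_2,\dots$ of non-identity $3$-cells of $\mathbf{Toff}$ with ${\tt t}_2(\alpha_i)={\tt s}_2(\alpha_{i+1})$ for all $i$; equivalently, every sequence of reductions of circuits by the rules of $R_3$ (applied in any context, modulo the $3$-category axioms) is finite.
   Context: $\mathbf{Toff}$ is the free strict $3$-category generated by: one $0$-cell $\ast$; one $1$-generator, the wire $1:\ast\to\ast$ (so $1$-cells are bundles of $n$ wires); four $2$-generators (gates) $s:2\Rightarrow2$ (SWAP), $N:1\Rightarrow1$ (NOT), $T_2:2\Rightarrow2$ (controlled NOT), $T_3:3\Rightarrow3$ (Toffoli), so that $2$-cells are circuits built from these gates by parallel and sequential composition; and the set $R_3$ of $3$-generators (rewriting rules) listed below. Write $\star_0$ for parallel composition (left to right), $\star_1$ for sequential composition (diagrammatic order), $1$ also for the identity $2$-cell on one wire and $\mathrm{id}_n$ for the identity $2$-cell on $n$ wires. Let $L_3=(s\star_01)\star_1(1\star_0s)$, $L_4=(s\star_01\star_01)\star_1(1\star_0s\star_01)\star_1(1\star_01\star_0s)$, $L'_3=(1\star_0s)\star_1(s\star_01)$, $L'_4=(1\star_01\star_0s)\star_1(1\star_0s\star_01)\star_1(s\star_01\star_01)$. $R_3$ consists of: permutation rules $s\star_1s\Rrightarrow\mathrm{id}_2$ and $(s\star_01)\star_1(1\star_0s)\star_1(s\star_01)\Rrightarrow(1\star_0s)\star_1(s\star_01)\star_1(1\star_0s)$;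 annihilation rules $N\star_1N\Rrightarrow\mathrm{id}_1$, $T_2\star_1T_2\Rrightarrow\mathrm{id}_2$, $T_3\star_1T_3\Rrightarrow\mathrm{id}_3$; sliding rules $s\star_1(N\star_01)\Rrightarrow(1\star_0N)\star_1s$, $s\star_1(1\star_0N)\Rrightarrow(N\star_01)\star_1s$, $L_3\star_1(T_2\star_01)\Rrightarrow(1\star_0T_2)\star_1L_3$, $L'_3\star_1(1\star_0T_2)\Rrightarrow(T_2\star_01)\star_1L'_3$, $L_4\star_1(T_3\star_01)\Rrightarrow(1\star_0T_3)\star_1L_4$, $L'_4\star_1(1\star_0T_3)\Rrightarrow(T_3\star_01)\star_1L'_4$; and the swapped Toffoli rule $(s\star_01)\star_1T_3\Rrightarrow T_3\star_1(s\star_01)$. $3$-cells of $\mathbf{Toff}$ are formal $\star_0,\star_1,\star_2$-composites of these rules and identities, taken modulo the strict $3$-category axioms (associativity, local units, exchange); $2$-cells are likewise taken modulo these axioms. *)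

(* Defs.v *)
From Stdlib Require Import Arith.

(** 1-cells are bundles of n wires, identified with n : nat.
    2-cells are formal (star_0, star_1)-composites of identities and gates,
    taken modulo the strict 2-category axioms (relation [ceq] below).
    3-cells are generated by the rules [rule]; a non-identity 3-cell
    between 2-cells decomposes (modulo the 3-category axioms) into a finite
    nonempty sequence of rule applications in context ([step]). *)

Inductive gate : Type := SWAP | NOT | CNOT | TOF.

Definition gate_ar (g : gate) : nat :=
  match g with SWAP => 2 | NOT => 1 | CNOT => 2 | TOF => 3 end.

(** Formal 2-cell terms.  All generators have equal source and target,
    so every 2-cell has source = target = [ar]. *)
Inductive term : Type :=
| tid   : nat -> term
| tgen  : gate -> term
| comp0 : term -> term -> term
| comp1 : term -> term -> term.

Fixpoint ar (t : term) : nat :=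
  match t with
  | tid n => n
  | tgen g => gate_ar g
  | comp0 t u => ar t + ar u
  | comp1 t _ => ar t
  end.

Fixpoint wt (t : term) : Prop :=
  match t with
  | tid _ => True
  | tgen _ => True
  | comp0 t u => wt t /\ wt u
  | comp1 t u => wt t /\ wt u /\ ar t = ar u
  end.

Inductive ceq : term -> term -> Prop :=
| ceq_refl  : forall t, ceq t t
| ceq_sym   : forall t u, ceq t u -> ceq u t
| ceq_trans : forall t u v, ceq t u -> ceq u v -> ceq t v
| ceq_comp0 : forall t t' u u', ceq t t' -> ceq u u' -> ceq (comp0 t u) (comp0 t' u')
| ceq_comp1 : forall t t' u u', ceq t t' -> ceq u u' -> ceq (comp1 t u) (comp1 t' u')
| ceq_assoc0 : forall t u v, ceq (comp0 (comp0 t u) v) (comp0 t (comp0 u v))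
| ceq_assoc1 : forall t u v, ceq (comp1 (comp1 t u) v) (comp1 t (comp1 u v))
| ceq_unit0l : forall t, ceq (comp0 (tid 0) t) t
| ceq_unit0r : forall t, ceq (comp0 t (tid 0)) t
| ceq_unit1l : forall t, ceq (comp1 (tid (ar t)) t) t
| ceq_unit1r : forall t, ceq (comp1 t (tid (ar t))) t
| ceq_idcomp : forall m n, ceq (comp0 (tid m) (tid n)) (tid (m + n))
| ceq_exch : forall f g f' g', ar f = ar f' -> ar g = ar g' ->
    ceq (comp1 (comp0 f g) (comp0 f' g')) (comp0 (comp1 f f') (comp1 g g')).

Definition w1 : term := tid 1.
Definition sw : term := tgen SWAP.
Definition nt : term := tgen NOT.
Definition T2 : term := tgen CNOT.
Definition T3 : term := tgen TOF.

Definition L3  : term := comp1 (comp0 sw w1) (comp0 w1 sw).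
Definition L4  : term :=
  comp1 (comp1 (comp0 sw (comp0 w1 w1)) (comp0 w1 (comp0 sw w1)))
        (comp0 w1 (comp0 w1 sw)).
Definition L3' : term := comp1 (comp0 w1 sw) (comp0 sw w1).
Definition L4' : term :=
  comp1 (comp1 (comp0 w1 (comp0 w1 sw)) (comp0 w1 (comp0 sw w1)))
        (comp0 sw (comp0 w1 w1)).

Inductive rule : term -> term -> Prop :=
| r_ss    : rule (comp1 sw sw) (tid 2)
| r_ybe   : rule (comp1 (comp1 (comp0 sw w1) (comp0 w1 sw)) (comp0 sw w1))
                 (comp1 (comp1 (comp0 w1 sw) (comp0 sw w1)) (comp0 w1 sw))
| r_NN    : rule (comp1 nt nt) (tid 1)
| r_T2T2  : rule (comp1 T2 T2) (tid 2)
| r_T3T3  : rule (comp1 T3 T3) (tid 3)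
| r_slN1  : rule (comp1 sw (comp0 nt w1)) (comp1 (comp0 w1 nt) sw)
| r_slN2  : rule (comp1 sw (comp0 w1 nt)) (comp1 (comp0 nt w1) sw)
| r_slT2  : rule (comp1 L3 (comp0 T2 w1)) (comp1 (comp0 w1 T2) L3)
| r_slT2' : rule (comp1 L3' (comp0 w1 T2)) (comp1 (comp0 T2 w1) L3')
| r_slT3  : rule (comp1 L4 (comp0 T3 w1)) (comp1 (comp0 w1 T3) L4)
| r_slT3' : rule (comp1 L4' (comp0 w1 T3)) (comp1 (comp0 T3 w1) L4')
| r_swT3  : rule (comp1 (comp0 sw w1) T3) (comp1 T3 (comp0 sw w1)).

Definition in_context (f : term) (a : nat) (l : term) (b : nat) (g : term) : term :=
  comp1 f (comp1 (comp0 (tid a) (comp0 l (tid b))) g).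

Definition step (t u : term) : Prop :=
  wt t /\ wt u /\
  exists (f g l r : term) (a b : nat),
    rule l r /\ wt f /\ wt g /\
    ar f = a + ar l + b /\ ar g = a + ar l + b /\
    ceq t (in_context f a l b g) /\ ceq u (in_context f a r b g).

(* Main.v *)
Require Import Defs.
From Stdlib Require Import List Lia Arith Wf_nat.
Import ListNotations.

Definition gsem (g : gate) (l : list nat) : list nat * nat :=
  match g, l with
  | SWAP, x :: y :: r => (S y :: S x :: r, x)
  | NOT, x :: r => (l, x)
  | CNOT, x :: y :: r => (l, x + y)
  | TOF, x :: y :: z :: r => (l, x + y + z)
  | _, _ => (l, 0)
  end.

Fixpoint sem (t : term) (l : list nat) : list nat * nat :=
  match t with
  | tid _ => (l, 0)
  | tgen g => gsem g l
  | comp0 t u =>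
      (fst (sem t (firstn (ar t) l)) ++ fst (sem u (skipn (ar t) l)),
       snd (sem t (firstn (ar t) l)) + snd (sem u (skipn (ar t) l)))
  | comp1 t u =>
      (fst (sem u (fst (sem t l))), snd (sem t l) + snd (sem u (fst (sem t l))))
  end.

Fixpoint count (t : term) : nat :=
  match t with
  | tid _ => 0
  | tgen _ => 1
  | comp0 t u => count t + count u
  | comp1 t u => count t + count u
  end.

Definition cost (t : term) : nat := snd (sem t (repeat 0 (ar t))).

Lemma sem_len : forall t l, length (fst (sem t l)) = length l.
Proof.
  induction t; intro l; simpl.
  - reflexivity.
  - destruct g; destruct l as [|x [|y [|z r]]]; reflexivity.
  - rewrite length_app, IHt1, IHt2, length_firstn, length_skipn; lia.
  - rewrite IHt2, IHt1; reflexivity.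
Qed.

Lemma firstn_app_ex (a b : list nat) : firstn (length a) (a ++ b) = a.
Proof. induction a; simpl; congruence. Qed.
Lemma skipn_app_ex (a b : list nat) : skipn (length a) (a ++ b) = b.
Proof. induction a; simpl; congruence. Qed.

Lemma ceq_inv t u : ceq t u -> ar t = ar u /\ count t = count u /\ (wt t <-> wt u) /\
  (wt t -> forall l, length l = ar t -> sem t l = sem u l).
Proof.
  induction 1.
  - tauto.
  - destruct IHceq as (A & B & C & D). repeat split; try congruence; try tauto.
    intros W l Hl. symmetry. apply D; [tauto | congruence].
  - destruct IHceq1 as (A & B & C & D), IHceq2 as (A' & B' & C' & D').
    repeat split; try congruence; try tauto.
    intros W l Hl. rewrite (D W l Hl). apply D'; [tauto|congruence].
  - destruct IHceq1 as (A & B & C & D), IHceq2 as (A' & B' & C' & D').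
    simpl. repeat split; try congruence; try tauto.
    intros [W1 W2] l Hl. rewrite <- A.
    rewrite (D W1), (D' W2); auto.
    + rewrite length_skipn; lia.
    + rewrite length_firstn; lia.
  - destruct IHceq1 as (A & B & C & D), IHceq2 as (A' & B' & C' & D').
    simpl. refine (conj _ (conj _ (conj _ _))); [congruence|congruence| |].
    { split; intros (X1 & X2 & X3); repeat split; try tauto; congruence. }
    intros (W1 & W2 & E) l Hl. rewrite (D W1 l Hl), (D' W2); auto.
    rewrite sem_len; congruence.
  - simpl. repeat split; try lia; try tauto.
    intros _ l _. rewrite firstn_firstn, skipn_firstn_comm, skipn_skipn.
    replace (Nat.min (ar t) (ar t + ar u)) with (ar t) by lia.
    replace (ar t + ar u - ar t) with (ar u) by lia.
    rewrite (Nat.add_comm (ar u) (ar t)).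
    rewrite app_assoc. f_equal. lia.
  - simpl. repeat split; try lia; try tauto.
    intros _ l _. f_equal. lia.
  - simpl. repeat split; try lia; try tauto.
    intros _ l _. destruct (sem t l); simpl; f_equal; lia.
  - simpl. repeat split; try lia; try tauto.
    intros _ l Hl. rewrite firstn_all2, skipn_all2 by lia. simpl.
    rewrite app_nil_r, Nat.add_0_r. destruct (sem t l); simpl; f_equal; lia.
  - simpl. repeat split; try lia; try tauto.
    intros _ l _. destruct (sem t l); simpl; f_equal; lia.
  - simpl. repeat split; try lia; try tauto.
    intros _ l _. destruct (sem t l); simpl; f_equal; lia.
  - simpl. repeat split; try lia; try tauto.
    intros _ l _. rewrite firstn_skipn. reflexivity.
  - simpl. repeat split; try lia; try tauto.
    intros _ l Hl.
    set (X := fst (sem f (firstn (ar f) l))).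
    set (Y := fst (sem g (skipn (ar f) l))).
    assert (LX : length X = ar f') by (unfold X; rewrite sem_len, length_firstn; lia).
    rewrite <- LX, firstn_app_ex, skipn_app_ex. f_equal. lia.
Qed.

Lemma rule_props l r : rule l r -> ar l = ar r /\ wt l /\ wt r /\
  (count r < count l \/ (count r = count l /\ forall x, length x = ar l ->
     fst (sem r x) = fst (sem l x) /\ snd (sem r x) < snd (sem l x))).
Proof.
  destruct 1; unfold L3, L4, L3', L4', sw, nt, T2, T3, w1;
    (split; [reflexivity|]); (split; [simpl; tauto|]); (split; [simpl; tauto|]);
    try (left; simpl; lia);
    right; (split; [reflexivity|]); intros x Hx;
    repeat (destruct x as [|? x]; simpl in Hx; try lia);
    simpl; split; try lia; try reflexivity.
Qed.

Lemma step_dec t u : step t u -> count u < count t \/ (count u = count t /\ cost u < cost t).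
Proof.
  intros (Wt & Wu & f & g & l & r & a & b & R & Wf & Wg & Hf & Hg & Ct & Cu).
  destruct (ceq_inv _ _ Ct) as (At & Kt & _ & St).
  destruct (ceq_inv _ _ Cu) as (Au & Ku & _ & Su).
  destruct (rule_props _ _ R) as (Alr & _ & _ & [Hc | [Hc Hloc]]).
  - left. rewrite Kt, Ku. simpl. lia.
  - right. split. { rewrite Kt, Ku. simpl. lia. }
    unfold cost. rewrite (St Wt), (Su Wu) by (rewrite repeat_length; reflexivity).
    rewrite At, Au. unfold in_context. cbn [sem ar fst snd].
    rewrite <- Alr.
    set (o1 := fst (sem f (repeat 0 (ar f)))).
    assert (Lo : length o1 = a + ar l + b) by (unfold o1; rewrite sem_len, repeat_length; lia).
    set (x := firstn (ar l) (skipn a o1)).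
    assert (Lx : length x = ar l) by (unfold x; rewrite length_firstn, length_skipn; lia).
    destruct (Hloc x Lx) as [E1 E2]. rewrite E1. lia.
Qed.

Lemma no_inf : forall n m (c : nat -> term), count (c 0) = n -> cost (c 0) = m ->
  (forall i, step (c i) (c (S i))) -> False.
Proof.
  intro n; induction n as [n IHn] using (well_founded_induction lt_wf).
  intro m; induction m as [m IHm] using (well_founded_induction lt_wf).
  intros c Hn Hm Hs. destruct (step_dec _ _ (Hs 0)) as [H|[H1 H2]].
  - apply (IHn (count (c 1)) ltac:(lia) (cost (c 1)) (fun i => c (S i))); auto.
  - apply (IHm (cost (c 1)) ltac:(lia) (fun i => c (S i))); auto; lia.
Qed.

Theorem mainTheorem7 :
  ~ (exists c : nat -> term, forall i : nat, step (c i) (c (S i))).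
Proof.
  intros [c Hc]. exact (no_inf _ _ c eq_refl eq_refl Hc).
Qed.
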